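(* Let $B$ be a $p\times q$ matrix, $G$ a $q\times q$ symmetric matrix and $G'$ a $p\times p$ symmetric matrix. Let $$A=\begin{bmatrix} G' & B & B\\ B^T & 0 & G\\ B^T & G & 0\end{bmatrix},\qquad C=\begin{bmatrix} G' & B & B\\ B^T & G & 0\\ B^T & 0 & G\end{bmatrix},$$ both of size $(p+2q)\times(p+2q)$. Then $A\oplus\begin{bmatrix} G & 0\\ 0 & G\end{bmatrix}$ and $C\oplus\begin{bmatrix}0 & G\\ G & 0\end{bmatrix}$ are cospectral.
   Context: For matrices $X,Y$, $X\oplus Y=\begin{bmatrix} X&0\\0&Y\end{bmatrix}$, and $0$ denotes a zero matrix of appropriate size. Two square matrices are cospectral if they have the same eigenvalues with the same multiplicities. *)

(* Defs.v *)
From HB Require Import structures.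
From mathcomp Require Import all_boot all_order all_algebra.
Set Implicit Arguments. Unset Strict Implicit. Unset Printing Implicit Defensive.
Import GRing.Theory Num.Theory.
Local Open Scope ring_scope.

Definition dsum (F : nzRingType) (m n : nat) (X : 'M[F]_m) (Y : 'M[F]_n)
  : 'M[F]_(m + n) := block_mx X 0 0 Y.

Definition cospectral (F : fieldType) (n : nat) (X Y : 'M[F]_n) : Prop :=
  forall lambda : F, mup lambda (char_poly X) = mup lambda (char_poly Y).

(* Main.v *)
Require Import Defs.
From mathcomp Require Import all_boot all_order all_algebra.
From mathcomp Require Import reals.
From mathcomp Require Import ring.
Import GRing.Theory Num.Theory.
Local Open Scope ring_scope.

Lemma char_poly_sim (R : fieldType) n (P M N : 'M[R]_n) :
  P \in unitmx -> P *m M = N *m P -> char_poly M = char_poly N.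
Proof.
move=> Pu e.
have e2: map_mx polyC P *m char_poly_mx M = char_poly_mx N *m map_mx polyC P.
  by rewrite /char_poly_mx mulmxBr mulmxBl -!map_mxM e scalar_mxC.
have nz: \det (map_mx (@polyC R) P) != 0.
  by rewrite det_map_mx polyC_eq0 -unitfE -unitmxE.
apply: (mulIf nz); rewrite mulrC /char_poly -!det_mulmx e2 //.
Qed.

Lemma scalar_mxD' (R : nzRingType) n (a b : R) : (a+b)%:M = a%:M + b%:M :> 'M_n.
Proof. by apply/matrixP=> i j; rewrite !mxE mulrnDl. Qed.

Ltac blk := repeat (rewrite !(mulmx_block, mul_row_block, mul_block_col, mul_row_col, mul_col_row, mul_mx_row, mul_col_mx,
   mul1mx, mulmx1, mul0mx, mulmx0, addr0, add0r, mulNmx, mulmxN, opp_block_mx, oppr0, opprK,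
   add_block_mx, add_row_mx, add_col_mx) /=);
   rewrite ?scalar_mxD'; repeat (rewrite !(mulmxDl, mulmxDr, mul1mx, mulmx1, subrr, addr0, add0r, add_row_mx, add_col_mx, opp_row_mx, opp_col_mx, addNr, row_mx0, col_mx0, block_mx0, block_mxEv) /=).

Ltac fin := repeat (match goal with |- col_mx _ _ = col_mx _ _ => congr col_mx | |- row_mx _ _ = row_mx _ _ => congr row_mx | |- row_mx _ _ = col_mx (row_mx _ _) (row_mx _ _) => rewrite -[RHS]block_mxEv block_mxEh ?col_mx0 | |- col_mx (row_mx _ _) (row_mx _ _) = row_mx _ _ => rewrite -[LHS]block_mxEv block_mxEh ?col_mx0 end);
  try (apply/matrixP=> i j; rewrite !mxE; case: (_ == _); rewrite /= ?mulr1n ?mulr0n; ring).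

Theorem theorem3p17 (R : realType) (p q : nat)
  (B : 'M[R]_(p, q)) (G : 'M[R]_q) (G' : 'M[R]_p)
  (hG : G^T = G) (hG' : G'^T = G') :
  let A : 'M[R]_(p + (q + q)) :=
    block_mx G' (row_mx B B) (col_mx B^T B^T) (block_mx 0 G G 0) in
  let C : 'M[R]_(p + (q + q)) :=
    block_mx G' (row_mx B B) (col_mx B^T B^T) (block_mx G 0 0 G) in
  cospectral (dsum A (block_mx G 0 0 G)) (dsum C (block_mx 0 G G 0)).
Proof.
move=> A C.
pose J : 'M[R]_(q+q) := block_mx 1%:M 1%:M 1%:M 1%:M.
pose K : 'M[R]_(q+q) := block_mx 1%:M 0 (-1%:M) 0.
pose L : 'M[R]_(q+q) := block_mx 1%:M (-1%:M) (-1%:M) 1%:M.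
pose P22 : 'M[R]_(q+q) := block_mx 0 1%:M 0 1%:M.
pose P11 : 'M[R]_(p + (q+q)) := block_mx 2%:M 0 0 J.
pose P12 : 'M[R]_(p + (q+q), q+q) := col_mx 0 K.
pose P21 : 'M[R]_(q+q, p + (q+q)) := row_mx 0 L.
pose Q21 : 'M[R]_(q+q, p + (q+q)) := row_mx 0 (block_mx 2%:M (-2%:M) 0 0).
pose Q22 : 'M[R]_(q+q) := block_mx 0 0 2%:M 2%:M.
have e11 : P11 *m A = C *m P11.
  by rewrite /P11 /A /C /J; blk; fin.
have e12 : P12 *m block_mx G 0 0 G = C *m P12.
  by rewrite /P12 /K /C; blk; fin.
have e21 : P21 *m A = block_mx 0 G G 0 *m P21.
  by rewrite /P21 /L /A; blk; fin.
have e22 : P22 *m block_mx G 0 0 G = block_mx 0 G G 0 *m P22.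
  by rewrite /P22; blk; fin.
have inv : block_mx P11 (col_mx 0 L) Q21 Q22 *m block_mx P11 P12 P21 P22 = 4%:M.
  by rewrite !(scalar_mx_block _ _ 4) /= /P11 /L /Q21 /Q22 /P12 /P21 /P22 /J /K; blk; fin.
have Pu : block_mx P11 P12 P21 P22 \in unitmx.
  have h4 : (4 : R) != 0 by rewrite pnatr_eq0.
  have := @mulmx1_unit _ _ (4^-1 *: block_mx P11 (col_mx 0 L) Q21 Q22)
     (block_mx P11 P12 P21 P22).
  rewrite -scalemxAl inv scale_scalar_mx mulVf //.
  by case=> // _.
clearbody J K L P22 P11 P12 P21 Q21 Q22 A C.
move=> lambda; congr (mup _ _).
rewrite /dsum; eapply (@char_poly_sim R _ _ _ _ Pu).
rewrite [LHS]mulmx_block [RHS]mulmx_block !mulmx0 !mul0mx !addr0 !add0r.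
by rewrite e11 e12 e21 e22.
Qed.
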